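(* (Completeness of MPLP.) Let $G=(\mathcal{V},\mathcal{E})$ be a finite directed graph with a start vertex $s_0$ and a goal region $\mathcal{G}\subseteq\mathcal{V}$, each edge $e$ having a true cost $c^t(e)\in[0,\infty]$. If there exists at least one feasible path in $G$ from $s_0$ to $\mathcal{G}$, then MPLP run on this problem returns a solution.
   Context: Planning problem: vertices of $G$ are states, and each edge $e=\{s,a\}$ corresponds to applying a deterministic action $a$ at state $s$. Each edge has a true cost $c^t(e)$, computed by an (expensive) edge-evaluation routine, and a cheaply computable lazy cost $c^l(e)$ with $c^l(e)\le c^t(e)$. An edge is feasible if $c^t(e)<\infty$; a path is feasible if all its edges are feasible; the cost of a path is the sum of its edge costs. MPLP (Massively Parallel Lazy Planning) is the following algorithm. A search process repeatedly runs a weighted A* search (with heuristic inflation factor $\epsilon^h\ge 1$ and an admissible heuristic) from $s_0$ to $\mathcal{G}$ on the current graph, in which each edge's cost is its true cost if that edge has already been evaluated and its lazy cost otherwise. When a state is expanded, its outgoing edges are generated lazily (not evaluated) and every newly discovered edge is inserted into a priority queue $E^{open}$ of edges awaiting evaluation. Concurrently and asynchronously, a pool of threads repeatedly removes edges from $E^{open}$, evaluates them to obtain their true costs, marks them as evaluated, and updates their costs in the graph. When a search reaches a goal state, the resulting path is recorded (and the evaluation priority of its unevaluated edges is raised); a monitoring process waits for all edges of recorded paths to be evaluated, and MPLP returns a recorded path as the solution once it is found to be feasible with true cost not exceeding the goal $g$-value $goal\_g$ computed by the most recent search; otherwise searches are repeated on the updated graph. *)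

(* Defs.v *)
(* Abstract model of MPLP (Massively Parallel Lazy Planning)
   as a nondeterministic interleaving transition system of three kinds of
   processes: the search process (small-step weighted A-star), the edge-evaluation
   thread pool, and the monitoring process. *)
From HB Require Import structures.
From mathcomp Require Import all_boot all_order all_algebra.
Set Implicit Arguments. Unset Strict Implicit. Unset Printing Implicit Defensive.
Import Order.TTheory GRing.Theory Num.Theory.
Local Open Scope ring_scope.

(* Extended nonnegative costs: [Some c] is the finite cost c, [None] is +oo. *)
Section ExtCost.
Variable R : realFieldType.
Definition cadd (a b : option R) : option R :=
  match a, b with Some x, Some y => Some (x + y) | _, _ => None end.
Definition cle (a b : option R) : bool :=
  match a, b with
  | _, None => true
  | None, Some _ => false
  | Some x, Some y => x <= y
  end.
Definition clt (a b : option R) : bool :=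
  match a, b with
  | Some _, None => true
  | Some x, Some y => x < y
  | _, _ => false
  end.
End ExtCost.

(* A planning problem: finite directed (multi)graph with vertex type V and
   edge type Ed (edge e goes from src e to dst e), start s0, goal region,
   true costs ct (in [0,oo]), lazy costs cl, heuristic h, inflation eps. *)
Record problem (R : realFieldType) := Problem {
  V : finType;
  Ed : finType;
  src : Ed -> V;
  dst : Ed -> V;
  s0 : V;
  goal : {set V};
  ct : Ed -> option R;
  cl : Ed -> option R;
  h : V -> R;
  eps : R }.

Arguments src {R p} _.
Arguments dst {R p} _.
Arguments ct {R} p _.
Arguments cl {R} p _.
Arguments h {R} p _.
Arguments s0 {R} p.
Arguments goal {R} p.
Arguments eps {R} p.

Section MPLP.
Variables (R : realFieldType) (P : problem R).

Local Notation V := (V P).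
Local Notation Ed := (Ed P).

Fixpoint is_path (s : V) (q : seq Ed) : bool :=
  if q is e :: q' then (src e == s) && is_path (dst e) q' else true.
Fixpoint path_end (s : V) (q : seq Ed) : V :=
  if q is e :: q' then path_end (dst e) q' else s.
Definition path_cost (c : Ed -> option R) (q : seq Ed) : option R :=
  foldr (fun e acc => cadd (c e) acc) (Some 0) q.
Definition feasible_edge (e : Ed) : bool := ct P e != None.
Definition feasible (q : seq Ed) : bool := all feasible_edge q.

(* State of one weighted A-star search: g-values, stored back-pointer paths
   (path from s0 recorded along the parent pointers), OPEN and CLOSED. *)
Record sstate := SState {
  sg : V -> option R;
  sbp : V -> seq Ed;
  sopen : {set V};
  sclosed : {set V} }.

Record gstate := GState {
  evald : {set Ed};
  eopen : {set Ed};
  srch : option sstate;        (* current search (None: a new one starts) *)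
  recorded : seq (seq Ed);     (* recorded paths awaiting the monitor *)
  last_g : option R;           (* goal_g of the most recent search *)
  result : option (seq Ed) }.

Definition init_state : gstate := GState set0 set0 None [::] None None.

Definition cur (st : gstate) (e : Ed) : option R :=
  if e \in evald st then ct P e else cl P e.

Definition fval (ss : sstate) (v : V) : option R :=
  cadd (sg ss v) (Some (eps P * h P v)).

Definition init_search : sstate :=
  SState (fun v => if v == s0 P then Some 0 else None) (fun _ => [::])
         [set s0 P] set0.

Definition fmin (ss : sstate) (s : V) : Prop :=
  s \in sopen ss /\ forall t, t \in sopen ss -> cle (fval ss s) (fval ss t).

(* Expansion of s (reading the current edge costs in st) turns ss into ss'
   (weighted A-star without reopening: closed successors are ignored). *)
Definition expand (st : gstate) (ss : sstate) (s : V) (ss' : sstate) : Prop :=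
  let cand e := cadd (sg ss s) (cur st e) in
  sclosed ss' = s |: sclosed ss /\
  forall t : V,
    if t \in sclosed ss' then
      [/\ sg ss' t = sg ss t, sbp ss' t = sbp ss t & t \notin sopen ss']
    else if [exists e, [&& src e == s, dst e == t & clt (cand e) (sg ss t)]]
    then exists e, [/\ src e = s, dst e = t,
                       clt (cand e) (sg ss t),
                       (forall e', src e' = s -> dst e' = t ->
                          cle (cand e) (cand e')) &
                       [/\ sg ss' t = cand e,
                            sbp ss' t = rcons (sbp ss s) e &
                            t \in sopen ss']]
    else [/\ sg ss' t = sg ss t, sbp ss' t = sbp ss t &
             (t \in sopen ss') = (t \in sopen ss)].

Inductive search_step : gstate -> gstate -> Prop :=
| SStart st :
    result st = None -> srch st = None ->
    search_step st (GState (evald st) (eopen st) (Some init_search)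
                           (recorded st) (last_g st) None)
| SFail st ss :
    result st = None -> srch st = Some ss -> sopen ss = set0 ->
    search_step st (GState (evald st) (eopen st) None
                           (recorded st) None None)
| SGoal st ss s :
    result st = None -> srch st = Some ss -> fmin ss s -> s \in goal P ->
    search_step st (GState (evald st) (eopen st) None
                           (rcons (recorded st) (sbp ss s)) (sg ss s) None)
| SExpand st ss s ss' :
    result st = None -> srch st = Some ss -> fmin ss s -> s \notin goal P ->
    expand st ss s ss' ->
    search_step st
      (GState (evald st)
              (eopen st :|: [set e | (src e == s) &&
                                     (e \notin evald st :|: eopen st)])
              (Some ss') (recorded st) (last_g st) None).

Inductive eval_step : gstate -> gstate -> Prop :=
| EvalStep st e :
    result st = None -> e \in eopen st ->
    eval_step st (GState (e |: evald st) (eopen st :\ e) (srch st)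
                         (recorded st) (last_g st) None).

Inductive monitor_step (p : seq Ed) : gstate -> gstate -> Prop :=
| MAccept st :
    result st = None -> p \in recorded st -> all (fun e => e \in evald st) p ->
    feasible p -> cle (path_cost (ct P) p) (last_g st) ->
    monitor_step p st (GState (evald st) (eopen st) (srch st)
                              (recorded st) (last_g st) (Some p))
| MReject st :
    result st = None -> p \in recorded st -> all (fun e => e \in evald st) p ->
    ~~ (feasible p && cle (path_cost (ct P) p) (last_g st)) ->
    monitor_step p st (GState (evald st) (eopen st) (srch st)
                              (rem p (recorded st)) (last_g st) None).

Definition step (st st' : gstate) : Prop :=
  [\/ search_step st st', eval_step st st' | exists p, monitor_step p st st'].

Definition halted (st : gstate) : bool := result st != None.

(* An (infinite, possibly stuttering after halting) execution of MPLP. *)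
Definition is_run (ex : nat -> gstate) : Prop :=
  ex 0%N = init_state /\
  forall n, step (ex n) (ex n.+1) \/ (halted (ex n) /\ ex n.+1 = ex n).

Definition fair (ex : nat -> gstate) : Prop :=
  [/\ forall n, exists2 m, (n <= m)%N &
        search_step (ex m) (ex m.+1) \/ halted (ex m),
      forall n e, e \in eopen (ex n) -> exists2 m, (n <= m)%N &
        e \in evald (ex m) \/ halted (ex m) &
      forall n p, p \in recorded (ex n) -> all (fun e => e \in evald (ex n)) p ->
        exists2 m, (n <= m)%N & monitor_step p (ex m) (ex m.+1) \/ halted (ex m)].

End MPLP.

Arguments is_path {R} P s q.
Arguments path_end {R} P s q.
Arguments feasible {R} P q.
Arguments feasible_edge {R} P e.

(* Main.v *)
Require Import Defs.
From HB Require Import structures.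
From mathcomp Require Import all_boot all_order all_algebra.
From mathcomp Require Import zify.
From Stdlib Require Import Classical.
Set Implicit Arguments. Unset Strict Implicit. Unset Printing Implicit Defensive.
Import Order.TTheory GRing.Theory Num.Theory.
Local Open Scope ring_scope.

Section Proof.
Variables (R : realFieldType) (P : problem R).
Local Notation V := (V P).
Local Notation Ed := (Ed P).
Hypothesis Hclct : forall e, cle (cl P e) (ct P e).

Definition pg (p : seq Ed) := is_path P (s0 P) p && (path_end P (s0 P) p \in goal P).

Record SInv (ss : sstate P) : Prop := {
 si_open : forall v, v \in sopen ss -> sg ss v != None;
 si_path : forall v, sg ss v != None ->
    is_path P (s0 P) (sbp ss v) && (path_end P (s0 P) (sbp ss v) == v);
 si_disj : forall v, v \in sclosed ss -> v \notin sopen ss;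
 si_s0 : s0 P \in sopen ss :|: sclosed ss;
 si_g : forall v, sg ss v != None -> v \in sopen ss :|: sclosed ss;
 si_edge : forall e, feasible_edge P e -> src e \in sclosed ss ->
    dst e \in sopen ss :|: sclosed ss;
 si_goal : forall v, v \in sclosed ss -> v \notin goal P;
 si_size : forall v, (size (sbp ss v) <= #|sclosed ss|)%N }.

Lemma is_path_rcons v q e :
  is_path P v (rcons q e) = is_path P v q && (src e == path_end P v q).
Proof. by elim: q v => [|x q IH] v /=; rewrite ?andbT // IH andbA. Qed.

Lemma path_end_rcons v q e : path_end P v (rcons q e) = dst e.
Proof. by elim: q v => [|x q IH] v /=. Qed.

Lemma cur_fin st e : feasible_edge P e -> cur st e != None.
Proof.
rewrite /feasible_edge /cur; case: ifP => // _.
by have := Hclct e; case: (cl P e) => //; case: (ct P e).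
Qed.

Lemma expand_inv st ss s ss' : SInv ss -> fmin ss s -> s \notin goal P ->
  expand st ss s ss' -> SInv ss'.
Proof.
move=> I [sO _] sG [Hcl Ht].
have sC : s \notin sclosed ss by apply/negP => /(si_disj I); rewrite sO.
have gs := si_open I sO.
have mono : forall v, v \in sopen ss :|: sclosed ss -> v \in sopen ss' :|: sclosed ss'.
  move=> v vOC; have := Ht v; case: ifP => [vC _|vC]; first by rewrite inE vC orbT.
  have vC' : v \notin sclosed ss by rewrite Hcl inE in vC; case/norP: (negbT vC).
  case: ifP => _.
    by case=> e [_ _ _ _ [_ _ Ho]]; rewrite inE Ho.
  case=> _ _ Ho; rewrite inE Ho; move: vOC; rewrite inE (negbTE vC') orbF => -> //.
split.
- move=> v vO; have := Ht v; case: ifP => [_ [_ _]|_]; first by rewrite vO.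
  case: ifP => _.
    case=> e [_ _ Hlt _ [-> _ _]]; move: Hlt; by case: (cadd _ _).
  by case=> -> _ Ho; rewrite Ho in vO; apply: (si_open I).
- move=> v; have := Ht v; case: ifP => [_ [-> -> _]|_]; first exact: (si_path I).
  case: ifP => _.
    case=> e [es ev _ _ [_ -> _]] _.
    have := si_path I gs; case/andP=> p1 /eqP p2.
    by rewrite is_path_rcons path_end_rcons es ev p1 p2 !eqxx.
  by case=> -> -> _; apply: (si_path I).
- by move=> v vC; have := Ht v; rewrite vC => -[_ _].
- exact: mono (si_s0 I).
- move=> v; have := Ht v; case: ifP => [vC _ _|vC]; first by rewrite inE vC orbT.
  case: ifP => _.
    by case=> e [_ _ _ _ [_ _ Ho]]; rewrite inE Ho.
  case=> -> _ Ho /(si_g I); rewrite !inE Ho vC orbF; case/orP => // vc.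
  by move: vC; rewrite Hcl inE vc orbT.
- move=> e fe; rewrite {1}Hcl => /setU1P [es|eC]; last exact: mono (si_edge I fe eC).
  have := Ht (dst e); case: ifP => [vC _|vC]; first by rewrite inE vC orbT.
  case: ifP => Hex.
    by case=> e' [_ _ _ _ [_ _ Ho]]; rewrite inE Ho.
  case=> Hg _ Ho.
  have : sg ss (dst e) != None.
    apply/negP => /eqP Hn; move/negbT: Hex; apply/negP; rewrite negbK.
    apply/existsP; exists e; rewrite es !eqxx /= Hn.
    by move: gs (cur_fin st fe); case: (sg ss s) => //; case: (cur st e).
  move/(si_g I); rewrite !inE Ho; case/orP => [->//|dC].
  by move: vC; rewrite Hcl !inE dC orbT.
- by move=> v; rewrite Hcl => /setU1P [-> //|]; apply: (si_goal I).
- have cardC : #|sclosed ss'| = #|sclosed ss|.+1 by rewrite Hcl cardsU1 sC.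
  move=> v; have := Ht v; case: ifP => [_ [_ -> _]|_].
    by rewrite cardC; apply: leqW; apply: (si_size I).
  case: ifP => _.
    case=> e [_ _ _ _ [_ -> _]]; rewrite size_rcons cardC ltnS; exact: (si_size I).
  by case=> _ -> _; rewrite cardC; apply: leqW; apply: (si_size I).
Qed.


Record Inv (st : gstate P) : Prop := {
 i_rec : forall p, p \in recorded st -> pg p;
 i_res : forall p, result st = Some p -> pg p && feasible P p;
 i_srch : forall ss, srch st = Some ss -> SInv ss;
 i_disj : forall e, e \in eopen st -> e \notin evald st }.

Lemma init_sinv : SInv (init_search P).
Proof.
split => //=.
- by move=> v; rewrite inE => ->.
- by move=> v /=; case: (v =P s0 P) => [->|]; rewrite ?eqxx.
- by move=> v; rewrite in_set0.
- by rewrite !inE eqxx.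
- by move=> v; case: (v =P s0 P) => [->|]; rewrite ?inE ?eqxx.
- by move=> e _; rewrite in_set0.
- by move=> v; rewrite in_set0.
Qed.

Lemma init_inv : Inv (init_state P).
Proof. split => //= ? ; rewrite ?in_set0 //. Qed.

Lemma step_inv st st' : Inv st -> step st st' -> Inv st'.
Proof.
move=> I [S|E|[p M]].
- case: S I.
  + move=> {}st _ _ I; split => //=; try apply: (i_rec I); try apply: (i_res I);
      try apply: (i_disj I).
    by move=> ss [<-]; apply: init_sinv.
  + move=> {}st ss _ _ _ I; split => //=; try apply: (i_rec I); try apply: (i_disj I).
  + move=> {}st ss s _ Hs [sO _] sG I; split => //=; try apply: (i_disj I).
    move=> p; rewrite mem_rcons inE => /orP [/eqP ->|]; last exact: (i_rec I).
    have := si_path (i_srch I Hs) (si_open (i_srch I Hs) sO).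
    by case/andP => p1 /eqP p2; rewrite /pg p1 p2 sG.
  + move=> {}st ss s ss' _ Hs Hf sG Hexp I; split => //=;
      try apply: (i_rec I); try apply: (i_res I).
    * by move=> ss1 [<-]; apply: expand_inv Hexp => //; apply: (i_srch I Hs).
    * move=> e; rewrite !inE => /orP [/(i_disj I) //|/andP [_]].
      by rewrite negb_or => /andP [].
- case: E I => {}st e _ eO; split => //=; try apply: (i_rec I); try apply: (i_res I);
    try apply: (i_srch I).
  move=> x; rewrite !inE => /andP [xe xO]; rewrite negb_or xe /=; exact: (i_disj I).
- case: M I => {}st.
  + move=> _ pr _ fp _ I; split => //=; try apply: (i_srch I); try apply: (i_disj I).
    * exact: (i_rec I).
    * by move=> p' [<-]; rewrite (i_rec I pr).
  + move=> _ pr _ _ I; split => //=; try apply: (i_srch I); try apply: (i_disj I).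
    * by move=> p' /mem_rem; apply: (i_rec I).
Qed.


Variable q0 : seq Ed.
Hypothesis Hq0 : [&& is_path P (s0 P) q0, path_end P (s0 P) q0 \in goal P & feasible P q0].

Lemma no_fail ss : SInv ss -> sopen ss = set0 -> False.
Proof.
move=> I O0.
have walk : forall q v, is_path P v q -> feasible P q -> v \in sclosed ss ->
    path_end P v q \in sclosed ss.
  elim=> [|e q IH] v //= /andP [/eqP ev pq] /andP [fe fq] vC.
  apply: IH => //; have := si_edge I fe; rewrite ev O0 set0U; exact.
case/and3P: Hq0 => p1 p2 p3.
have s0C : s0 P \in sclosed ss by have := si_s0 I; rewrite O0 set0U.
by have := si_goal I (walk _ _ p1 p3 s0C); rewrite p2.
Qed.

Definition meas (st : gstate P) : nat :=
  if srch st is Some ss then (#|V| - #|sclosed ss|)%N else #|V|.+1.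

Definition goalstep (st st' : gstate P) : Prop :=
  exists ss s, [/\ srch st = Some ss, s \in sopen ss &
    st' = GState (evald st) (eopen st) None (rcons (recorded st) (sbp ss s))
                 (sg ss s) None].

Lemma search_classify st st' : Inv st -> search_step st st' ->
  (meas st' < meas st)%N \/ goalstep st st'.
Proof.
move=> I S; case: S I.
- by move=> {}st _ Hs _; left; rewrite /meas /= Hs cards0 subn0.
- by move=> {}st ss _ Hs O0 I; case: (no_fail (i_srch I Hs) O0).
- by move=> {}st ss s _ Hs [sO _] _ _; right; exists ss, s.
- move=> {}st ss s ss' _ Hs [sO _] _ [Hcl _] I; left; rewrite /meas /= Hs.
  have sC : s \notin sclosed ss.
    by apply/negP => /(si_disj (i_srch I Hs)); rewrite sO.
  have := max_card (mem (sclosed ss')).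
  rewrite Hcl cardsU1 sC /=; lia.
Qed.

Lemma step_lastg st st' : Inv st -> step st st' ->
  last_g st' = last_g st \/ goalstep st st'.
Proof.
move=> I [S|E|[p M]].
- case: S I => //=; try by left.
  + by move=> {}st ss _ Hs O0 I; case: (no_fail (i_srch I Hs) O0).
  + by move=> {}st ss s _ Hs [sO _] _ _; right; exists ss, s.
- by case: E; left.
- by case: M; left.
Qed.

Lemma step_evald (st st' : gstate P) : step st st' -> evald st \subset evald st'.
Proof.
case=> [S|E|[p M]].
- by case: S.
- by case: E => *; apply: subsetUr.
- by case: M.
Qed.

Lemma cadd0 (a : option R) : cadd a (Some 0) = a.
Proof. by case: a => //= x; rewrite addr0. Qed.

Lemma caddA (a b c : option R) : cadd a (cadd b c) = cadd (cadd a b) c.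
Proof. by case: a; case: b; case: c => //= *; rewrite addrA. Qed.

Lemma path_cost_rcons (c : Ed -> option R) (q : seq Ed) e :
  path_cost c (rcons q e) = cadd (path_cost c q) (c e).
Proof.
elim: q => [|x q IH] /=; first by rewrite cadd0; case: (c e) => //= y; rewrite add0r.
by rewrite IH caddA.
Qed.

Definition SInvE (E : {set Ed}) (ss : sstate P) : Prop :=
  forall v, sg ss v != None ->
    sg ss v = path_cost (ct P) (sbp ss v) /\ all (fun e => e \in E) (sbp ss v).

Lemma init_invE E : SInvE E (init_search P).
Proof. by move=> v /=; case: (v =P s0 P). Qed.

Lemma expand_invE st ss s ss' : SInvE (evald st) ss -> fmin ss s ->
  (forall e, src e = s -> e \in evald st) ->
  expand st ss s ss' -> SInvE (evald st) ss'.
Proof.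
move=> IE [sO _] Hev [_ Ht] v.
have := Ht v; case: ifP => [_ [-> -> _]|_]; first exact: IE.
case: ifP => _; last by case=> -> -> _; apply: IE.
case=> e [es _ Hlt _ [-> -> _]] _.
have gs : sg ss s != None by move: Hlt; case: (sg ss s).
have [g1 g2] := IE s gs.
have ee := Hev e es.
by rewrite /cur ee g1 path_cost_rcons all_rcons ee g2.
Qed.


Lemma cost_feasible p : path_cost (ct P) p != None -> feasible P p.
Proof.
elim: p => [|e p IH] //=; rewrite /feasible /= => H.
apply/andP; split.
  by move: H; rewrite /feasible_edge; case: (ct P e).
by apply: IH; move: H; case: (ct P e) => //=; case: (path_cost _ _).
Qed.

Lemma monitor_reject p st st' : monitor_step p st st' -> result st' = None ->
  ~~ (feasible P p && cle (path_cost (ct P) p) (last_g st)).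
Proof. by case. Qed.

Lemma invE_step st st' E : evald st = E -> eopen st = set0 -> eopen st' = set0 ->
  (forall ss, srch st = Some ss -> SInvE E ss) -> step st st' ->
  forall ss, srch st' = Some ss -> SInvE E ss.
Proof.
move=> HE O O' IE [S|Ev|[p M]].
- case: S HE O O' IE.
  + by move=> {}st _ _ _ _ _ _ ss [<-]; apply: init_invE.
  + by [].
  + by [].
  + move=> {}st ss s ss' _ Hs Hf _ Hexp HE O /= O' IE ss1 [<-].
    rewrite -HE; apply: expand_invE Hexp => //; first by rewrite HE; apply: IE.
    move=> e es; apply/negPn/negP => eE.
    have : e \in (set0 : {set Ed}).
      by rewrite -O' !inE es eqxx O inE orbF eE.
    by rewrite inE.
- by case: Ev HE O O' IE => {}st e _ _ _ _ _ /= IE.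
- by case: M HE O O' IE => {}st; [move=> _ _ _ _ _ _ _ _ IE | move=> _ _ _ _ _ _ _ IE].
Qed.

Definition K := #|V|.
Definition decode (f : {ffun 'I_K -> option Ed}) : seq Ed :=
  pmap id [seq f i | i <- enum 'I_K].

Lemma enc_ex p : (size p <= K)%N -> exists f, decode f = p.
Proof.
move=> Hs; exists [ffun i : 'I_K => nth None (map Some p) i].
rewrite /decode.
have -> : [seq [ffun i : 'I_K => nth None (map Some p) i] i | i <- enum 'I_K]
    = [seq nth None (map Some p) i | i <- iota 0 K].
  rewrite -val_enum_ord -map_comp; apply: eq_map => i /=; by rewrite ffunE.
rewrite -(subnKC Hs) iotaD map_cat pmap_cat.
have -> : [seq nth None [seq Some i | i <- p] i | i <- iota 0 (size p)] = map Some p.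
  by rewrite -(size_map Some) ; apply: (mkseq_nth None (map Some p)).
rewrite (map_pK (g := Some) (f := id)) //.
suff -> : forall d n, (size p <= n)%N ->
    pmap id [seq nth None [seq Some i | i <- p] i | i <- iota n d] = [::].
  by rewrite cats0. by rewrite add0n.
elim=> [|d IH] n Hn //=.
rewrite nth_default ?size_map //=; apply: IH; exact: leqW.
Qed.


Variable ex : nat -> gstate P.
Hypothesis Hrun : is_run ex.
Hypothesis Hfair : fair ex.

Lemma inv_all n : Inv (ex n).
Proof.
elim: n => [|n IH]; first by rewrite (proj1 Hrun); apply: init_inv.
case: (proj2 Hrun n) => [S|[_ ->] //]; exact: step_inv S.
Qed.

Hypothesis Hnh : forall n, result (ex n) = None.

Lemma stepn n : step (ex n) (ex n.+1).
Proof. by case: (proj2 Hrun n) => // -[]; rewrite /halted Hnh. Qed.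

Lemma evald_mono n m : (n <= m)%N -> evald (ex n) \subset evald (ex m).
Proof.
elim: m => [|m IH]; first by rewrite leqn0 => /eqP ->.
rewrite leq_eqVlt => /orP [/eqP -> //|/IH H].
exact: subset_trans H (step_evald (stepn m)).
Qed.

Lemma stab : exists N, forall m, (N <= m)%N -> evald (ex m) = evald (ex N).
Proof.
suff : forall k n, (#|Ed| - #|evald (ex n)| <= k)%N ->
    exists N, forall m, (N <= m)%N -> evald (ex m) = evald (ex N).
  by move=> H; exact: (H _ 0%N (leqnn _)).
elim=> [|k IH] n Hk.
all: case: (classic (forall m, (n <= m)%N -> evald (ex m) = evald (ex n))) => [H|H];
  first by exists n.
all: have [m Hm] : exists m, ~ ((n <= m)%N -> evald (ex m) = evald (ex n))
  by apply: not_all_ex_not.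
all: have nm : (n <= m)%N by case: (leqP n m) => // nm; exfalso; apply: Hm; rewrite leqNgt nm.
all: have neq : evald (ex m) != evald (ex n) by apply/eqP => e; apply: Hm.
all: have pr : evald (ex n) \proper evald (ex m)
  by rewrite properEneq eq_sym neq evald_mono.
all: have := proper_card pr; have := subset_leq_card (subsetT (evald (ex m))).
all: rewrite cardsT.
- move=> h1 h2; exfalso; lia.
- move=> h1 h2; apply: (IH m); move: Hk h1 h2; lia.
Qed.


Lemma eval_srch (st st' : gstate P) : eval_step st st' -> srch st' = srch st.
Proof. by case. Qed.
Lemma monitor_srch p (st st' : gstate P) : monitor_step p st st' -> srch st' = srch st.
Proof. by case. Qed.

Lemma goal_reach k n : (meas (ex n) < k)%N ->
  exists m, (n <= m)%N /\ goalstep (ex m) (ex m.+1).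
Proof.
elim: k n => [//|k IH] n Hn.
have helper : forall n', search_step (ex n') (ex n'.+1) -> (meas (ex n') < k.+1)%N ->
    exists m, (n' <= m)%N /\ goalstep (ex m) (ex m.+1).
  move=> n' S Hn'; case: (search_classify (inv_all n') S) => [lt|g].
    have [m [H1 H2]] := IH n'.+1 (leq_trans lt Hn').
    by exists m; split => //; apply: ltnW.
  by exists n'.
case: Hfair => F1 _ _.
have [m0 Hm0 [S0|H]] := F1 n; last by move: H; rewrite /halted Hnh.
rewrite -(subnKC Hm0) in S0.
move: (m0 - n)%N S0 => d S0; clear Hm0.
elim: d n Hn S0 => [|d IHd] n' Hn' S0.
  by rewrite addn0 in S0; apply: helper.
case: (stepn n') => [S|Ev|[p M]]; first exact: helper.
- have Hm1 : meas (ex n'.+1) = meas (ex n') by rewrite /meas (eval_srch Ev).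
  have S1 : search_step (ex (n'.+1 + d)) (ex (n'.+1 + d).+1) by rewrite addSnnS.
  have [m [H1 H2]] := IHd n'.+1 ltac:(by rewrite Hm1) S1.
  by exists m; split => //; apply: ltnW.
- have Hm1 : meas (ex n'.+1) = meas (ex n') by rewrite /meas (monitor_srch M).
  have S1 : search_step (ex (n'.+1 + d)) (ex (n'.+1 + d).+1) by rewrite addSnnS.
  have [m [H1 H2]] := IHd n'.+1 ltac:(by rewrite Hm1) S1.
  by exists m; split => //; apply: ltnW.
Qed.

Section Stab.
Variable N : nat.
Hypothesis HN : forall m, (N <= m)%N -> evald (ex m) = evald (ex N).

Lemma eopen_empty m : (N <= m)%N -> eopen (ex m) = set0.
Proof.
move=> Hm; apply/setP => e; rewrite inE; apply/negP => eO.
case: Hfair => _ F2 _.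
have [m' Hm' [H|H]] := F2 m e eO; last by move: H; rewrite /halted Hnh.
have := i_disj (inv_all m) eO.
by rewrite (HN Hm) -(HN (leq_trans Hm Hm')) H.
Qed.

Lemma exists_n1 : exists n1, (N <= n1)%N /\ srch (ex n1) = None.
Proof.
have [m [Hm [ss [s [_ _ Hnext]]]]] := goal_reach (ltnSn (meas (ex N))).
by exists m.+1; split; [apply: leqW | rewrite Hnext].
Qed.

Definition cnt (c : R) :=
  #|[set f : {ffun 'I_K -> option Ed} | clt (path_cost (ct P) (decode f)) (Some c)]|.

Section N1.
Variable n1 : nat.
Hypothesis Hn1 : (N <= n1)%N.
Hypothesis Hs1 : srch (ex n1) = None.

Lemma invE_after m : (n1 <= m)%N -> forall ss, srch (ex m) = Some ss ->
  SInvE (evald (ex N)) ss.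
Proof.
elim: m => [|m IH] Hm ss Hss.
  by move: Hm; rewrite leqn0 => /eqP Hn; move: Hs1; rewrite Hn Hss.
move: Hm; rewrite leq_eqVlt => /orP [/eqP Hn|Hm].
  by move: Hs1; rewrite Hn Hss.
have NM : (N <= m)%N by apply: leq_trans Hn1 Hm.
apply: (invE_step (st := ex m)) (stepn m) ss Hss.
- exact: HN.
- exact: eopen_empty.
- exact: eopen_empty (leqW NM).
- exact: IH.
Qed.

Lemma descent k : forall m, (n1 <= m)%N -> forall ss s c,
  srch (ex m) = Some ss -> s \in sopen ss ->
  ex m.+1 = GState (evald (ex m)) (eopen (ex m)) None
              (rcons (recorded (ex m)) (sbp ss s)) (sg ss s) None ->
  sg ss s = Some c -> (cnt c < k)%N -> False.
Proof.
elim: k => [//|k IH] m Hm ss s c Hss sO Hnext Hc Hk.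
have NM : (N <= m)%N by apply: leq_trans Hn1 Hm.
have [pc pe] : sg ss s = path_cost (ct P) (sbp ss s) /\ all (fun e => e \in evald (ex N)) (sbp ss s)
  by apply: (invE_after Hm Hss); rewrite Hc.
have fp : feasible P (sbp ss s) by apply: cost_feasible; rewrite -pc Hc.
have pr : sbp ss s \in recorded (ex m.+1) by rewrite Hnext /= mem_rcons mem_head.
have pev : all (fun e => e \in evald (ex m.+1)) (sbp ss s) by rewrite (HN (leqW NM)).
case: Hfair => _ _ F3.
have [m' Hm' [M|H]] := F3 m.+1 _ pr pev; last by move: H; rewrite /halted Hnh.
have rej := monitor_reject M (Hnh m'.+1).
rewrite fp -pc Hc /= in rej.
have G : forall d, exists m1 ss1 s1, [/\ (n1 <= m1)%N, srch (ex m1) = Some ss1,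
    s1 \in sopen ss1,
    ex m1.+1 = GState (evald (ex m1)) (eopen (ex m1)) None
              (rcons (recorded (ex m1)) (sbp ss1 s1)) (sg ss1 s1) None &
    last_g (ex (m.+1 + d)) = sg ss1 s1].
  elim=> [|d [m1 [ss1 [s1 [H1 H2 H3 H4 H5]]]]].
    by exists m, ss, s; split => //; rewrite addn0 Hnext.
  case: (step_lastg (inv_all (m.+1 + d)) (stepn (m.+1 + d))) => [Hl|[ss2 [s2 [A1 A2 A3]]]].
    by exists m1, ss1, s1; split => //; rewrite addnS Hl.
  exists (m.+1 + d), ss2, s2; split => //.
    by apply: leq_trans (leq_addr _ _); apply: leq_trans Hm _.
  by rewrite addnS A3.
have [m1 [ss1 [s1 [H1 H2 H3 H4 H5]]]] := G (m' - m.+1)%N.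
rewrite subnKC // in H5.
have gs1 := si_open (i_srch (inv_all m1) H2) H3.
move: gs1 H5; case Hc1: (sg ss1 s1) => [c1|] // _ H5.
rewrite H5 /= -ltNge in rej.
apply: (IH m1 H1 ss1 s1 c1 H2 H3 H4 Hc1).
rewrite ltnS in Hk; apply: (leq_trans _ Hk); apply: proper_card; apply/properP; split.
  apply/subsetP => f; rewrite !inE; case: (path_cost _ _) => // y /=.
  by move=> /lt_trans; apply.
have [pc1 _] : sg ss1 s1 = path_cost (ct P) (sbp ss1 s1) /\ all (fun e => e \in evald (ex N)) (sbp ss1 s1)
  by apply: (invE_after H1 H2); rewrite Hc1.
have sz : (size (sbp ss1 s1) <= K)%N.
  apply: leq_trans (si_size (i_srch (inv_all m1) H2) s1) _.
  by rewrite /K -cardsT; apply: subset_leq_card; apply: subsetT.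
have [f1 Hf1] := enc_ex sz.
by exists f1; rewrite !inE Hf1 -pc1 Hc1 /= ?ltxx.
Qed.

End N1.

Lemma final_false : False.
Proof.
have [n1 [Hn1 Hs1]] := exists_n1.
have [m [Hm [ss [s [Hss sO Hnext]]]]] := goal_reach (ltnSn (meas (ex n1))).
have gs := si_open (i_srch (inv_all m) Hss) sO.
move: gs Hnext; case Hc: (sg ss s) => [c|] // _ Hnext.
apply: (descent Hn1 Hs1 (k := (cnt c).+1) Hm Hss sO _ Hc (ltnSn _)).
by rewrite Hnext Hc.
Qed.

End Stab.

End Proof.

Theorem theorem1 (R : realFieldType) (P : problem R) :
  1 <= eps P ->
  (forall e c, ct P e = Some c -> 0 <= c) ->
  (forall e c, cl P e = Some c -> 0 <= c) ->
  (forall e, cle (cl P e) (ct P e)) ->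
  (forall v, 0 <= h P v) ->
  (forall v q, is_path P v q -> path_end P v q \in goal P -> feasible P q ->
     cle (Some (h P v)) (path_cost (ct P) q)) ->
  (exists q, [&& is_path P (s0 P) q, path_end P (s0 P) q \in goal P
               & feasible P q]) ->
  forall ex : nat -> gstate P, is_run ex -> fair ex ->
  exists n p, result (ex n) = Some p /\
    [&& is_path P (s0 P) p, path_end P (s0 P) p \in goal P & feasible P p].
Proof.
move=> _ _ _ Hclct _ _ [q0 Hq0] ex Hrun Hfair.
case: (classic (exists n, result (ex n) <> None)) => [[n Hn]|Hn].
  case Hr: (result (ex n)) Hn => [p|] // _.
  exists n, p; split => //.
  by have := i_res (inv_all Hclct Hrun n) Hr; rewrite /pg -andbA.
exfalso.
have Hnh : forall n, result (ex n) = None.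
  move=> n; case Hr: (result (ex n)) => [p|] //; exfalso; apply: Hn.
  by exists n; rewrite Hr.
have [N HN] := stab Hq0 Hrun Hnh.
exact: (final_false Hclct Hq0 Hrun Hfair Hnh HN).
Qed.
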